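(* Let $n_0,n_1$ be positive integers, let $(\eta,\omega)$ be a pair of nonnegative integer sequences $(\eta_\ell)_{\ell\ge1},(\omega_\ell)_{\ell\ge1}$ with finite support, and for $\ell\ge1$ let $(y_\ell,z_\ell)$ be the unique real solution of $y_\ell+z_\ell=\sum_{i\ge1}\frac{\eta_{\ell+i}+\omega_{\ell+i}}{(n_0+n_1)^i}$ and $y_\ell-z_\ell=\omega_\ell-\eta_\ell$ if $n_0=n_1$, $y_\ell-z_\ell=\sum_{i\ge1}\frac{\eta_{\ell+i}-\omega_{\ell+i}}{(n_0-n_1)^i}$ if $n_0\ne n_1$. Set $(y_0,z_0)=(1,0)$. Then the equations $\eta_1=n_0y_0+n_1z_0-y_1$ and $\omega_1=n_1y_0+n_0z_0-z_1$ hold if and only if $\sum_{\ell\ge1}\frac{\eta_\ell+\omega_\ell}{(n_0+n_1)^\ell}=1$ and (when $n_0\ne n_1$) $\sum_{\ell\ge1}\frac{\eta_\ell-\omega_\ell}{(n_0-n_1)^\ell}=1$. *)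

(* Defs.v *)
From mathcomp Require Import all_boot all_order all_algebra.
Set Implicit Arguments. Unset Strict Implicit. Unset Printing Implicit Defensive.
Import Order.TTheory GRing.Theory Num.Theory.
Local Open Scope ring_scope.

Definition fin_supp (N : nat) (a : nat -> nat) : Prop := forall l, (N < l)%N -> a l = 0%N.

(* Sum over i >= 1 of a finitely supported series whose terms vanish for i > N:
   sum_{i >= 1} a i = sum_{1 <= i <= N} a i. *)
Definition fsum (R : realFieldType) (N : nat) (a : nat -> R) : R :=
  \sum_(1 <= i < N.+1) a i.

(* Main.v *)
Require Import Defs.
From mathcomp Require Import all_boot all_order all_algebra.
From mathcomp Require Import lra.
Import Order.TTheory GRing.Theory Num.Theory.
Local Open Scope ring_scope.

Lemma shift_fsum (R : realFieldType) (N : nat) (c : nat -> R) (q : R) :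
  q != 0 -> c N.+1 = 0 ->
  q * fsum N (fun i => c i / q ^+ i) = c 1%N + fsum N (fun i => c (1 + i)%N / q ^+ i).
Proof.
move=> q0 cN; rewrite /fsum mulr_sumr.
have -> : \sum_(1 <= i < N.+1) q * (c i / q ^+ i) =
          \sum_(1 <= i < N.+2) q * (c i / q ^+ i).
  by rewrite [in RHS]big_nat_recr //= cN mul0r mulr0 addr0.
rewrite big_nat_recl //=; congr (_ + _).
  by rewrite expr1 mulrC -mulrA mulVf // mulr1.
apply: eq_bigr => i _; rewrite add1n exprS invfM mulrA mulrA.
by rewrite [q * c i.+1]mulrC -(mulrA (c i.+1)) divff // mulr1.
Qed.

Theorem corollary1 (R : realFieldType) (n0 n1 : nat) (eta omega : nat -> nat)
  (N : nat) (y z : nat -> R) :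
  (0 < n0)%N -> (0 < n1)%N ->
  fin_supp N eta -> fin_supp N omega ->
  (forall l, (1 <= l)%N ->
     y l + z l = @fsum R N (fun i => ((eta (l + i)%N)%:R + (omega (l + i)%N)%:R)
                                  / (n0 + n1)%:R ^+ i)) ->
  (forall l, (1 <= l)%N ->
     y l - z l = (if n0 == n1 then (omega l)%:R - (eta l)%:R
                  else @fsum R N (fun i => ((eta (l + i)%N)%:R - (omega (l + i)%N)%:R)
                                        / (n0%:R - n1%:R) ^+ i))) ->
  y 0%N = 1 -> z 0%N = 0 ->
  ((eta 1%N)%:R = n0%:R * y 0%N + n1%:R * z 0%N - y 1%N /\
   (omega 1%N)%:R = n1%:R * y 0%N + n0%:R * z 0%N - z 1%N)
  <->
  (@fsum R N (fun l => ((eta l)%:R + (omega l)%:R) / (n0 + n1)%:R ^+ l) = 1 /\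
   (n0 != n1 -> @fsum R N (fun l => ((eta l)%:R - (omega l)%:R) / (n0%:R - n1%:R) ^+ l) = 1)).
Proof.
move=> p0 p1 fe fo Hs Hd -> ->.
rewrite !mulr1 !mulr0 !addr0.
have eN : eta N.+1 = 0%N by apply: fe.
have oN : omega N.+1 = 0%N by apply: fo.
have a0 : (n0 + n1)%:R != 0 :> R by rewrite pnatr_eq0 -lt0n addn_gt0 p0.
have HS := @shift_fsum R N (fun j => (eta j)%:R + (omega j)%:R : R) _ a0.
rewrite /= eN oN addr0 in HS; have {}HS := HS erefl.
have Hs1 := Hs 1%N isT.
have Hd1 := Hd 1%N isT.
move: HS Hs1 Hd1.
set T := fsum _ (fun l => _ / (n0 + n1)%:R ^+ l).
set S0 := fsum _ (fun i => _ / (n0 + n1)%:R ^+ i).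
rewrite natrD in a0 S0 T *.
set e1 := (eta 1%N)%:R; set o1 := (omega 1%N)%:R.
move=> HS Hs1 Hd1.
have key : e1 + o1 = n0%:R + n1%:R - (y 1%N + z 1%N) <-> S0 = 1.
  split => h.
    apply: (mulfI a0); rewrite mulr1 HS; lra.
  move: HS; rewrite h mulr1; lra.
case: eqP Hd1 => [E|/eqP E] Hd1.
  subst n1; split.
    case=> h1 h2; split=> [|/eqP//]; apply/key; lra.
  case=> h _; have := proj2 key h; lra.
have b0 : (n0%:R - n1%:R : R) != 0 by rewrite subr_eq0 eqr_nat.
have HD := @shift_fsum R N (fun j => (eta j)%:R - (omega j)%:R : R) _ b0.
rewrite /= eN oN subrr in HD; have {}HD := HD erefl.
move: HD Hd1.
set D0 := fsum _ (fun l => _ / (n0%:R - n1%:R) ^+ l).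
set U := fsum _ (fun i => _ / (n0%:R - n1%:R) ^+ i).
move=> HD Hd1.
have key2 : e1 - o1 = n0%:R - n1%:R - (y 1%N - z 1%N) <-> D0 = 1.
  split => h.
    apply: (mulfI b0); rewrite mulr1 HD; lra.
  move: HD; rewrite h mulr1; lra.
split.
  case=> h1 h2; split; first by apply/key; lra.
  by move=> _; apply/key2; lra.
case=> h hD; have h1 := proj2 key h; have h2 := proj2 key2 (hD isT).
move: h1 h2; move=> h1 h2; split; lra.
Qed.
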